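(* For every $n\ge2$, in the matching market with $n$ agents and $n$ items, every deterministic truthful non-bossy mechanism has rank-approximation factor at least $n-1$.
   Context: Matching market: $n$ agents and $m$ items (here $m=n$); each agent $j$ reports any strict total order $\succ_j$ on the items. An outcome is a matching; an unmatched agent receives the null item, ranked below every item. A deterministic mechanism maps each profile to a matching. It is truthful if for every agent $j$, $\succ_{-j}$, and $\succ_j,\succ'_j$, the item $j$ receives under $(\succ_j,\succ_{-j})$ is weakly preferred under $\succ_j$ to the item $j$ receives under $(\succ'_j,\succ_{-j})$. It is non-bossy if whenever an agent changes his reported order and his own allocated item stays the same, the whole output matching stays the same. $\mathrm{rank}_i(M;\succ)$ is the number of agents assigned one of their top-$i$ items by $M$, $\mathrm{maxrank}_i(\succ)$ its maximum over matchings; a mechanism has rank-approximation factor $\alpha$ if on every profile its output satisfies $\mathrm{rank}_i\ge\mathrm{maxrank}_i/\alpha$ for all $i$ (so a mechanism has factor smaller than $\alpha$ only if this holds for some value below $\alpha$). *)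

(* Defs.v *)
From HB Require Import structures.
From mathcomp Require Import all_boot all_order all_algebra all_fingroup.
Set Implicit Arguments. Unset Strict Implicit. Unset Printing Implicit Defensive.
Import Order.TTheory GRing.Theory Num.Theory.

(* Agents and items are both 'I_n (m = n).
   A strict total order on items is encoded by a permutation [r : {perm 'I_n}]
   giving each item its rank: item a is preferred to item b iff r a < r b
   (rank 0 = top item).  The "top-i items" are those with rank < i. *)
Definition pref n := {perm 'I_n}.
Definition profile n := {ffun 'I_n -> pref n}.

Definition outcome n := {ffun 'I_n -> option 'I_n}.

Definition is_matching n (M : outcome n) : bool :=
  [forall j, forall k, ((j != k) && (M j != None)) ==> (M j != M k)].

Definition weakly_prefers n (r : pref n) (x y : option 'I_n) : bool :=
  match x, y with
  | Some a, Some b => (r a <= r b)%N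
  | Some _, None => true
  | None, None => true
  | None, Some _ => false
  end.

Definition update n (P : profile n) (j : 'I_n) (r : pref n) : profile n :=
  [ffun k => if k == j then r else P k].

Definition mechanism n := profile n -> outcome n.

Definition truthful n (f : mechanism n) : Prop :=
  forall (P : profile n) (j : 'I_n) (r' : pref n),
    weakly_prefers (P j) (f P j) (f (update P j r') j).

Definition non_bossy n (f : mechanism n) : Prop :=
  forall (P : profile n) (j : 'I_n) (r' : pref n),
    f (update P j r') j = f P j -> f (update P j r') = f P.

Definition rank_i n (i : nat) (M : outcome n) (P : profile n) : nat :=
  #|[set j | if M j is Some a then (P j a < i)%N else false]|.

Definition maxrank_i n (i : nat) (P : profile n) : nat :=
  \max_(M : outcome n | is_matching M) rank_i i M P.

Definition has_rank_factor (R : realFieldType) n (f : mechanism n) (alpha : R)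
  : Prop :=
  (0 < alpha)%R /\
  forall (P : profile n) (i : nat),
    ((maxrank_i i P)%:R / alpha <= (rank_i i (f P) P)%:R)%R.

(* Main.v *)
Require Import Defs.
From mathcomp Require Import all_boot all_order all_algebra all_fingroup.
From mathcomp Require Import zify.
Import Order.TTheory GRing.Theory Num.Theory.

Definition mono_ok n (old new : pref n) (y : option 'I_n) : Prop :=
  match y with
  | Some a => forall b, (new b <= new a)%N -> (old b <= old a)%N
  | None => True
  end.

Arguments mono_ok {n}.

Lemma step n (f : mechanism n) : truthful f -> non_bossy f ->
  forall (P : profile n) (j : 'I_n) (r' : pref n), mono_ok (P j) r' (f P j) -> f (update P j r') = f P.
Proof.
move=> ht hnb P j r' hok; apply: hnb.
have hback : update (update P j r') j (P j) = P.
  by apply/ffunP=> k; rewrite !ffunE; case: eqP => // ->.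
have h1 := ht P j r'.
have h2 := ht (update P j r') j (P j); rewrite hback in h2.
move: hok h1 h2; rewrite /update ffunE eqxx.
case: (f P j) => [a|]; case: (f _ j) => [b|] //= hok h1 h2.
have := hok b h2 => h3.
have e : P j a = P j b by apply/val_inj/eqP; rewrite eqn_leq h1 h3.
by rewrite (perm_inj e).
Qed.

Lemma iter_step n (f : mechanism n) : truthful f -> non_bossy f ->
  forall P0 Q : profile n, (forall k, mono_ok (P0 k) (Q k) (f P0 k)) ->
  f Q = f P0.
Proof.
move=> ht hnb P0 Q hok.
pose Ps (s : seq 'I_n) : profile n := [ffun k => if k \in s then Q k else P0 k].
suff H : forall s, f (Ps s) = f P0.
  have -> : Q = Ps (enum 'I_n) by apply/ffunP=> k; rewrite ffunE mem_enum.
  exact: H.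
elim=> [|x s IH].
  by congr f; apply/ffunP=> k; rewrite ffunE.
have -> : Ps (x :: s) = update (Ps s) x (Q x).
  apply/ffunP=> k; rewrite !ffunE in_cons.
  by case: eqP => [->|]; rewrite ?ffunE.
rewrite step // IH.
rewrite ffunE; case: (x \in s); last exact: hok.
by rewrite /mono_ok; case: (f P0 x).
Qed.

Lemma inj_ext (T T' : finType) (A : {set T}) (B : {set T'}) (b0 : T') :
  (#|A| <= #|B|)%N -> exists h : T -> T',
  {in A &, injective h} /\ {in A, forall x, h x \in B}.
Proof.
move=> hAB; exists (fun x => nth b0 (enum B) (index x (enum A))).
have hi : forall x, x \in A -> (index x (enum A) < size (enum B))%N.
  move=> x xA; rewrite -cardE (leq_trans _ hAB) // cardE index_mem mem_enum //.
split.
- move=> x y xA yA /= /eqP e.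
  rewrite nth_uniq ?hi ?enum_uniq // in e.
  by apply: (@index_inj _ x (enum A)); rewrite ?mem_enum //; apply/eqP.
- by move=> x xA /=; rewrite -mem_enum mem_nth ?hi.
Qed.

Lemma tperm_val n (x w c : 'I_n) : val (tperm x w c) =
  if val c == val x then val w else if val c == val w then val x else val c.
Proof.
rewrite !(inj_eq val_inj).
case: tpermP => [->|->|h1 h2]; repeat (case: eqP => //=); try congruence.
all: by move=> e *; move: h1 h2; rewrite e eqxx.
Qed.

Theorem theorem8 (R : realFieldType) (n : nat) (hn : (2 <= n)%N)
  (f : mechanism n)
  (hmatch : forall P : profile n, is_matching (f P))
  (htruth : truthful f) (hnb : non_bossy f)
  (alpha : R) (hfac : has_rank_factor f alpha) :
  ((n - 1)%:R <= alpha)%R.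
Proof.
have n0 : (0 < n)%N by apply: ltnW.
pose z : 'I_n := Ordinal n0.
pose P0 : profile n := [ffun _ => 1%g].
pose y := f P0.
have hm : forall j k, y j = y k -> y j != None -> j = k.
  move=> j k e ne; have := hmatch P0; move/forallP/(_ j)/forallP/(_ k).
  case: eqP => // _ /=; rewrite ne /= => /negP; rewrite /y e; by case.
pose predo (a : 'I_n) : 'I_n := Ordinal (leq_ltn_trans (leq_pred a) (ltn_ord a)).
pose tA k := if y k is Some a then predo a else z.
pose A := [set k | if y k is Some a then a != z else false].
pose U := [set k | y k == None].
pose S := tA @: A.
have tAinj : {in A &, injective tA}.
  move=> k1 k2; rewrite !inE /tA.
  case e1: (y k1) => [a1|] //; case e2: (y k2) => [a2|] // h1 h2 /(congr1 val) /= ea.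
  have ea' : a1 = a2.
    apply: val_inj; move: h1 h2; rewrite -!(inj_eq val_inj) /= => h1 h2; lia.
  by apply: hm; rewrite ?e1 ?e2 ?ea'.
have cardS : #|S| = #|A| := card_in_imset tAinj.
have AU0 : A :&: U = set0.
  apply/setP=> k; rewrite !inE; case E: (y k) => [a|] //=; by rewrite andbF.
have cAU : (#|A :|: U| <= n)%N by rewrite -[X in (_ <= X)%N]card_ord max_card.
have cU : (#|U| <= #|~: S|)%N.
  have := cardsC S; have := cardsUI A U; rewrite AU0 cards0 card_ord; lia.
have [h [hinj hC]] := @inj_ext _ _ U (~: S) z cU.
pose t k := if k \in U then h k else tA k.
pose Q : profile n := [ffun k => tperm (t k) z].
have hQ : f Q = y.
  apply: iter_step => // k; rewrite /mono_ok !ffunE.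
  case e: (f P0 k) => [a|] // b; rewrite !perm1.
  have kU : (k \in U) = false by rewrite inE /y e.
  rewrite /t kU /tA /y e.
  rewrite !tperm_val /=; repeat (case: ifP => /eqP ?); lia.
have tinj : {in A :|: U &, injective t}.
  have dA : forall k, k \in A -> k \in U = false.
    by move=> k; rewrite !inE; case: (y k).
  have tS : forall k, k \in A -> t k \in S.
    by move=> k kA; rewrite /t dA // imset_f.
  have th : forall k, k \in U -> t k = h k by move=> k kU; rewrite /t kU.
  move=> k1 k2 /setUP [k1A|k1U] /setUP [k2A|k2U].
  - by rewrite /t !dA //; apply: tAinj.
  - by move=> e; have := hC _ k2U; rewrite inE -th // -e tS.
  - by move=> e; have := hC _ k1U; rewrite inE -th // e tS.
  - by rewrite /t k1U k2U; apply: hinj.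
pose M : outcome n := [ffun k => if k \in A :|: U then Some (t k) else None].
have Mm : is_matching M.
  apply/forallP=> j; apply/forallP=> k; apply/implyP=> /andP [njk].
  rewrite !ffunE; case: ifP => // hj _; case: ifP => // hk.
  apply/negP=> /eqP [] /(tinj _ _ hj hk) ejk; by rewrite ejk eqxx in njk.
have Zle : (#|[set k | y k == Some z]| <= 1)%N.
  rewrite leqNgt; apply/negP=> /card_gt1P [j [k [hj hk njk]]].
  move: hj hk; rewrite !inE => /eqP hj /eqP hk.
  by move: njk; rewrite (hm j k) ?eqxx // hj ?hk.
have rk : (rank_i 1 (f Q) Q <= 1)%N.
  apply: leq_trans Zle; apply: subset_leq_card; apply/subsetP=> k.
  rewrite hQ !inE ffunE; case e: (y k) => [a|] // ha.
  have kU : (k \in U) = false by rewrite inE e.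
  move: ha; rewrite tperm_val /t kU /tA e /=.
  case: eqP => [ea|na].
    move=> _; apply/eqP; congr Some; apply: val_inj => /=; lia.
  case: eqP => [ea|nb] ?.
    by apply/eqP; congr Some; apply: val_inj.
  by apply/eqP; congr Some; apply: val_inj => /=; lia.
have mr : (n - 1 <= maxrank_i 1 Q)%N.
  have HB := @leq_bigmax_cond (outcome n) (fun M => is_matching M) (fun M => rank_i 1 M Q) M Mm.
  apply: leq_trans HB.
  have : (n - 1 <= #|A :|: U|)%N.
    have := cardsC (A :|: U); rewrite card_ord => hc.
    suff : (#|~: (A :|: U)| <= 1)%N by lia.
    apply: leq_trans Zle; apply: subset_leq_card; apply/subsetP=> k.
    rewrite !inE; case: (y k) => [a|] //=; rewrite orbF negbK => /eqP ->; by [].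
  move/leq_trans; apply; apply: subset_leq_card; apply/subsetP=> k kAU.
  rewrite inE ffunE kAU ffunE tpermL /=; by [].
case: hfac => ha hf.
have := hf Q 1%N; rewrite ler_pdivrMr // => H.
apply: le_trans (_ : (maxrank_i 1 Q)%:R <= alpha)%R; first by rewrite ler_nat.
apply: le_trans H _; rewrite -[X in (_ <= X)%R]mul1r; apply: ler_wpM2r; [exact: ltW | by rewrite lern1].
Qed.
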